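(* Assume Assumption 1 (stated in the context). Let $\theta^0$, $D^3_\theta$ and $\epsilon_9>0$ be as in the context. Then there is a positive constant $\epsilon_{12}$ such that for every triple $(i,j,k)$ and every $t\in[0,T]$ one of the following holds: $$\text{dist}(b_{ij}(t,\theta^0),o_k)-d_0>\epsilon_{12},$$ or $$\text{dist}(b_{ij}(t,\theta^0),o_k)-d_0\le\epsilon_{12}\ \text{ and }\ \langle D^3_\theta,\nabla_\theta\text{dist}(b_{ij}(t,\theta^0),o_k)\rangle\ge\frac{\epsilon_9}{2}.$$
   Context: For a finite-dimensional parameter vector $\theta$ and $t\in[0,T]$, robot pieces $b_{ij}(t,\theta)\subset\mathbb{R}^3$ and obstacle pieces $o_k\subset\mathbb{R}^3$ are given; $\text{dist}$ is the shortest Euclidean distance between sets; $d_0\ge0$; $\mathcal{O}(\theta)$ is a differentiable cost. Assumption 1: the index set of triples $(i,j,k)$ is finite and each $(t,\theta)\mapsto\text{dist}(b_{ij}(t,\theta),o_k)$ is sufficiently smooth. $\theta^0$ is a parameter vector, and $D^3_\theta$ is a direction with positive constants $\epsilon_8,\epsilon_9$ such that $\langle D^3_\theta,\nabla_\theta\mathcal{O}(\theta^0)\rangle<-\epsilon_8$ and $\langle D^3_\theta,\nabla_\theta\text{dist}(b_{ij}(t,\theta^0),o_k)\rangle>\epsilon_9$ for all $(i,j,k,t)$ with $\text{dist}(b_{ij}(t,\theta^0),o_k)=d_0$. (Such a direction exists when the generalized Mangasarian–Fromovitz constraint qualification holds at $\theta^0$ and the first-order optimality condition fails there.) *)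

(* Defs.v *)
From HB Require Import structures.
From mathcomp Require Import all_boot all_order all_algebra.
From mathcomp Require Import all_classical all_reals all_analysis.
Set Implicit Arguments. Unset Strict Implicit. Unset Printing Implicit Defensive.
Import Order.TTheory GRing.Theory Num.Theory.
Import numFieldNormedType.Exports.
Local Open Scope classical_set_scope.
Local Open Scope ring_scope.

Definition dotr (R : realType) (m : nat) (u v : 'rV[R]_m) : R :=
  \sum_(l < m) u 0 l * v 0 l.

Definition enorm (R : realType) (m : nat) (u : 'rV[R]_m) : R :=
  Num.sqrt (dotr u u).

Definition setdist (R : realType) (A B : set 'rV[R]_3) : R :=
  inf [set enorm (x - y) | x in A & y in B].

Definition grad (R : realType) (n : nat) (f : 'rV[R]_n -> R) (x : 'rV[R]_n)
  : 'rV[R]_n :=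
  \row_(l < n) ('d f x (delta_mx 0 l : 'rV[R]_n)).

(* "Sufficiently smooth" (at least C^1) for a function of (t, theta):
   differentiable everywhere with continuous differential (all directional
   derivatives continuous in the base point). *)
Definition C1 (R : realType) (n : nat) (g : R * 'rV[R]_n -> R) : Prop :=
  (forall p, differentiable g p) /\
  (forall v : R * 'rV[R]_n, continuous (fun p => 'd g p v)).

(* Main.v *)
Require Import Defs.
From HB Require Import structures.
From mathcomp Require Import all_boot all_order all_algebra.
From mathcomp Require Import all_classical all_reals all_analysis.
From mathcomp Require Import lra.
Import Order.TTheory GRing.Theory Num.Theory.
Import numFieldNormedType.Exports.
Local Open Scope classical_set_scope.
Local Open Scope ring_scope.

Lemma dpart (R : realType) (n : nat) (f : R * 'rV[R]_n -> R) (t : R) (th v : 'rV[R]_n) :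
  differentiable f (t, th) ->
  'd (fun x => f (t, x)) th v = 'd f (t, th) (0, v).
Proof.
move=> df.
have -> : (fun x => f (t, x)) = f \o (fun x => (cst t x, id x)) by [].
have dp : differentiable (fun x : 'rV[R]_n => (cst t x, id x)) th.
  by apply: differentiable_pair.
rewrite diff_comp //= diff_pair //= diff_cst.
by rewrite (@diff_val _ _ _ _ _ _ _ (is_diff_id th)).
Qed.

Lemma contG (R : realType) (n : nat) (f : R * 'rV[R]_n -> R) (th : 'rV[R]_n) :
  (forall p, differentiable f p) -> continuous (fun t => f (t, th)).
Proof.
move=> df t.
have c1 : {for t, continuous (fun t : R => (t, th))}.
  apply: (@differentiable_continuous _ _ _ _ (fun t : R => (id t, cst th t))).
  exact: differentiable_pair.
exact: (continuous_comp c1 (differentiable_continuous (df _))).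
Qed.

Lemma contH (R : realType) (n : nat) (f : R * 'rV[R]_n -> R) (th v : 'rV[R]_n) :
  (forall v : R * 'rV[R]_n, continuous (fun p => 'd f p v)) ->
  continuous (fun t => 'd f (t, th) (0, v)).
Proof.
move=> cf t.
have c1 : {for t, continuous (fun t : R => (t, th))}.
  apply: (@differentiable_continuous _ _ _ _ (fun t : R => (id t, cst th t))).
  exact: differentiable_pair.
exact: (continuous_comp c1 (cf _ _)).
Qed.

Lemma fin_eps (R : realType) (X : finType) (P : X -> R -> Prop) :
  (forall x e e', 0 < e' -> e' <= e -> P x e -> P x e') ->
  (forall x, exists e, 0 < e /\ P x e) -> exists e, 0 < e /\ forall x, P x e.
Proof.
move=> mono ex.
have [m hm] := choice ex.
have mpos : 0 < \big[Num.min/1]_(x : X) m x.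
  by apply: lt_bigmin => // x _; exact: (hm x).1.
exists (\big[Num.min/1]_(x : X) m x); split => // x.
apply: (mono x (m x)) => //; [exact: bigmin_le | exact: (hm x).2].
Qed.

Lemma cont_sum (R : realType) (m : nat) (F : 'I_m -> R -> R) :
  (forall l, continuous (F l)) -> continuous (fun t => \sum_(l < m) F l t).
Proof.
move=> cF; apply: continuous_big; last by move=> l _; exact: cF.
exact: add_continuous.
Qed.

Theorem lemma9 (R : realType) (n : nat) (I J K : finType)
  (b : I -> J -> R -> 'rV[R]_n -> set 'rV[R]_3) (o : K -> set 'rV[R]_3)
  (T d0 : R) (theta0 D : 'rV[R]_n) (eps9 : R) :
  0 <= d0 ->
  (* Assumption 1 *)
  (forall i j k, C1 (fun p : R * 'rV[R]_n => setdist (b i j p.1 p.2) (o k))) ->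
  (* theta0 is feasible *)
  (forall i j k t, 0 <= t <= T -> d0 <= setdist (b i j t theta0) (o k)) ->
  0 < eps9 ->
  (forall i j k t, 0 <= t <= T -> setdist (b i j t theta0) (o k) = d0 ->
     dotr D (grad (fun th => setdist (b i j t th) (o k)) theta0) > eps9) ->
  exists eps12 : R, 0 < eps12 /\
    forall i j k t, 0 <= t <= T ->
      setdist (b i j t theta0) (o k) - d0 > eps12 \/
      (setdist (b i j t theta0) (o k) - d0 <= eps12 /\
       dotr D (grad (fun th => setdist (b i j t th) (o k)) theta0) >= eps9 / 2).
Proof.
move=> d0pos C1h feas e9pos hyp.
pose P (x : I * J * K) (e : R) := forall t, 0 <= t <= T ->
      setdist (b x.1.1 x.1.2 t theta0) (o x.2) - d0 > e \/
      (setdist (b x.1.1 x.1.2 t theta0) (o x.2) - d0 <= e /\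
       dotr D (grad (fun th => setdist (b x.1.1 x.1.2 t th) (o x.2)) theta0) >= eps9 / 2).
have mono : forall x e e', 0 < e' -> e' <= e -> P x e -> P x e'.
  move=> x e e' e'0 le H t ht; case: (H t ht) => [h1|[h1 h2]].
    by left; exact: le_lt_trans h1.
  case: (ltP e' (setdist (b x.1.1 x.1.2 t theta0) (o x.2) - d0)) => h3.
    by left.
  by right.
have exP : forall x, exists e, 0 < e /\ P x e.
  move=> [[i j] k] /=.
  rewrite /P /=.
  have [df cdf] := C1h i j k.
  set f := (fun p : R * 'rV[R]_n => setdist (b i j p.1 p.2) (o k)) in df cdf.
  case: (ltP T 0) => [Tneg|T0].
    exists 1; split => // t /andP[t0 tT]; exfalso.
    by have := le_lt_trans (le_trans t0 tT) Tneg; rewrite ltxx.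
  have Hrw : forall t, dotr D (grad (fun th => setdist (b i j t th) (o k)) theta0) =
      \sum_(l < n) D 0 l * 'd f (t, theta0) (0, delta_mx 0 l).
    move=> t; rewrite /dotr; apply: eq_bigr => l _; rewrite mxE.
    by have := @dpart _ _ _ t theta0 (delta_mx 0 l) (df (t, theta0)); rewrite /f /= => ->.
  pose psi t := Num.max (f (t, theta0) - d0)
     (\sum_(l < n) D 0 l * 'd f (t, theta0) (0, delta_mx 0 l) - eps9 / 2).
  have c1 : continuous (fun t : R => f (t, theta0) - d0).
    move=> t; exact: (continuousB (@contG _ _ f theta0 df t) (@cst_continuous _ _ d0 t)).
  have c2 : continuous (fun t : R =>
      \sum_(l < n) D 0 l * 'd f (t, theta0) (0, delta_mx 0 l) - eps9 / 2).
    have cs := @cont_sum R n (fun l t => D 0 l * 'd f (t, theta0) (0, delta_mx 0 l))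
      (fun l s => continuousM (@cst_continuous _ _ (D 0 l) s) (@contH _ _ f theta0 (delta_mx 0 l) cdf s)).
    move=> t; exact: (continuousB (cs t) (@cst_continuous _ _ (eps9 / 2) t)).
  have cpsi : continuous psi.
    move=> t; exact: (@continuous_max R R _ _ t (c1 t) (c2 t)).
  have [c hc hmin] := EVT_min T0 (continuous_subspaceT cpsi).
  have mpos : 0 < psi c.
    move: hc; rewrite in_itv /= => hc.
    have := feas i j k c hc; rewrite le_eqVlt => /orP[/eqP h|h].
      have := hyp i j k c hc (esym h); rewrite Hrw => h2.
      rewrite /psi lt_max; apply/orP; right.
      rewrite subr_gt0; apply: lt_trans h2.
      by rewrite gtr_pMr // invf_lt1 // ltr1n.
    by rewrite /psi lt_max; apply/orP; left; rewrite subr_gt0.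
  exists (psi c / 2); split; first by rewrite divr_gt0.
  move=> t ht.
  have hle : psi c <= psi t by apply: hmin; rewrite in_itv /=.
  case: (ltP (psi c / 2) (setdist (b i j t theta0) (o k) - d0)) => h1.
    by left.
  right; split => //.
  rewrite Hrw; case: (leP (eps9 / 2) (\sum_(l < n) D 0 l * 'd f (t, theta0) (0, delta_mx 0 l))) => // h2.
  move: mpos hle h1; set m := psi c => mpos hle h1; clearbody m.
  have : psi t <= m / 2.
    rewrite /psi ge_max; apply/andP; split; first exact: h1.
    apply: ltW; apply: lt_trans (_ : 0 < _); last by rewrite divr_gt0.
    by rewrite subr_lt0.
  move=> h3; have := le_trans hle h3.
  move=> h4; have : m <= 0 by lra.
  by rewrite leNgt mpos.
have [e [e0 He]] := @fin_eps R _ P mono exP.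
exists e; split => // i j k t ht; exact: (He (i, j, k) t ht).
Qed.
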